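(* Let $g\in\mathbb{R}^n$ be nonzero, $H\in\mathbb{S}^n$, $\epsilon>0$, $\delta>0$, $\zeta\in(0,1)$, and let $k_{\max}$ be any iteration limit. The step $s$ returned by Algorithm 2 (described in the context) satisfies \[ g^Ts+\tfrac12 s^THs\ \le\ -\tfrac12\,\epsilon\,\|s\|^2 . \]
   Context: $\mathbb{S}^n$ is the set of real symmetric $n\times n$ matrices, $\|\cdot\|$ the Euclidean norm; all computations are in exact arithmetic. Algorithm 2 (truncated CG for $\min_s g^Ts+\tfrac12 s^T(H+2\epsilon I)s$ s.t. $\|s\|\le\delta$): inputs nonzero $g$, $H\in\mathbb{S}^n$, $\epsilon>0$, $\delta>0$, $\zeta\in(0,1)$, and an iteration limit $k_{\max}\le n$ (either $n$ or a smaller cap). Set $y_0=0$, $r_0=g$, $p_0=-g$, $j=0$. While $j<k_{\max}$: (a) if $p_j^T(H+2\epsilon I)p_j\le\epsilon\|p_j\|^2$, compute $\sigma\ge0$ with $\|y_j+\sigma p_j\|=\delta$ and return $s=y_j+\sigma p_j$ with flag BND-NEG; (b) set $\alpha_j=\|r_j\|^2/(p_j^T(H+2\epsilon I)p_j)$ and $y_{j+1}=y_j+\alpha_jp_j$; if $\|y_{j+1}\|\ge\delta$, compute $\sigma\ge0$ with $\|y_j+\sigma p_j\|=\delta$ and return $s=y_j+\sigma p_j$ with flag BND-NORM; (c) set $r_{j+1}=r_j+\alpha_j(H+2\epsilon I)p_j$; if $\|r_{j+1}\|\le\tfrac{\zeta}{2}\min\{\|g\|,\epsilon\|y_{j+1}\|\}$,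 return $s=y_{j+1}$ with flag INT-RES; (d) set $\beta_{j+1}=\|r_{j+1}\|^2/\|r_j\|^2$, $p_{j+1}=-r_{j+1}+\beta_{j+1}p_j$, $j\leftarrow j+1$. If the loop exits, return the current iterate $s=y_j$ with flag INT-MAX. *)

(* Defs.v *)
From HB Require Import structures.
From mathcomp Require Import all_boot all_order all_algebra.
Set Implicit Arguments. Unset Strict Implicit. Unset Printing Implicit Defensive.
Import Order.TTheory GRing.Theory Num.Theory.
Local Open Scope ring_scope.

Section Alg2.
Variables (R : rcfType) (n : nat).

Definition dotv (u v : 'cV[R]_n) : R := (u^T *m v) 0 0.
Definition normv (u : 'cV[R]_n) : R := Num.sqrt (dotv u u).

Variables (g : 'cV[R]_n) (H : 'M[R]_n) (eps delta zeta : R).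

Definition Heps : 'M[R]_n := H + (2 * eps)%:M.

Record cgstate := CGState { cg_y : 'cV[R]_n; cg_r : 'cV[R]_n; cg_p : 'cV[R]_n }.

Definition cg_alpha (st : cgstate) : R :=
  normv (cg_r st) ^+ 2 / dotv (cg_p st) (Heps *m cg_p st).
Definition cg_ynext (st : cgstate) : 'cV[R]_n :=
  cg_y st + cg_alpha st *: cg_p st.
Definition cg_rnext (st : cgstate) : 'cV[R]_n :=
  cg_r st + cg_alpha st *: (Heps *m cg_p st).
Definition cg_step (st : cgstate) : cgstate :=
  let r' := cg_rnext st in
  let beta := normv r' ^+ 2 / normv (cg_r st) ^+ 2 in
  CGState (cg_ynext st) r' (- r' + beta *: cg_p st).

Definition cg_iter (j : nat) : cgstate := iter j cg_step (CGState 0 g (- g)).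

(* termination tests (a), (b), (c) of Algorithm 2 at a state *)
Definition test_neg (st : cgstate) : Prop :=
  dotv (cg_p st) (Heps *m cg_p st) <= eps * normv (cg_p st) ^+ 2.
Definition test_norm (st : cgstate) : Prop := normv (cg_ynext st) >= delta.
Definition test_res (st : cgstate) : Prop :=
  normv (cg_rnext st) <= zeta / 2 * Num.min (normv g) (eps * normv (cg_ynext st)).

Definition no_stop (st : cgstate) : Prop :=
  ~ test_neg st /\ ~ test_norm st /\ ~ test_res st.

Definition bnd_step (st : cgstate) (s : 'cV[R]_n) : Prop :=
  exists sigma : R, 0 <= sigma /\ s = cg_y st + sigma *: cg_p st /\ normv s = delta.

Definition stop_with (st : cgstate) (s : 'cV[R]_n) : Prop :=
  (test_neg st /\ bnd_step st s)
  \/ (~ test_neg st /\ test_norm st /\ bnd_step st s)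
  \/ (~ test_neg st /\ ~ test_norm st /\ test_res st /\ s = cg_ynext st).

Definition alg2_returns (kmax : nat) (s : 'cV[R]_n) : Prop :=
  (exists j, (j < kmax)%N /\ (forall i, (i < j)%N -> no_stop (cg_iter i))
             /\ stop_with (cg_iter j) s)
  \/ ((forall i, (i < kmax)%N -> no_stop (cg_iter i)) /\ s = cg_y (cg_iter kmax)).

End Alg2.

(* Main.v *)
Require Import Defs.
From HB Require Import structures.
From mathcomp Require Import all_boot all_order all_algebra.
From mathcomp Require Import ring lra.
Import Order.TTheory GRing.Theory Num.Theory.
Local Open Scope ring_scope.
Set Implicit Arguments. Unset Strict Implicit.
Section S.
Variables (R : rcfType) (n : nat).
Implicit Types u v w : 'cV[R]_n.
Lemma dotvE u v : dotv u v = \sum_j u j 0 * v j 0.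
Proof. by rewrite /dotv mxE; apply: eq_bigr => j _; rewrite mxE. Qed.
Lemma dotvC u v : dotv u v = dotv v u.
Proof. rewrite !dotvE; apply: eq_bigr => j _; exact: mulrC. Qed.
Lemma dotvDr u v w : dotv u (v + w) = dotv u v + dotv u w.
Proof. by rewrite /dotv mulmxDr mxE. Qed.
Lemma dotvDl u v w : dotv (v + w) u = dotv v u + dotv w u.
Proof. by rewrite dotvC dotvDr !(dotvC u). Qed.
Lemma dotvZr a u v : dotv u (a *: v) = a * dotv u v.
Proof. by rewrite /dotv -scalemxAr mxE. Qed.
Lemma dotvZl a u v : dotv (a *: v) u = a * dotv v u.
Proof. by rewrite dotvC dotvZr dotvC. Qed.
Lemma dotvNr u v : dotv u (- v) = - dotv u v.
Proof. by rewrite -scaleN1r dotvZr mulN1r. Qed.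
Lemma dotvNl u v : dotv (- v) u = - dotv v u.
Proof. by rewrite dotvC dotvNr dotvC. Qed.
Lemma dotv0r u : dotv u 0 = 0.
Proof. by rewrite /dotv mulmx0 mxE. Qed.
Lemma dotv0l u : dotv 0 u = 0.
Proof. by rewrite dotvC dotv0r. Qed.
Lemma dotv_ge0 u : 0 <= dotv u u.
Proof. by rewrite dotvE; apply: sumr_ge0 => j _; by rewrite -expr2 sqr_ge0. Qed.
Lemma normv2 u : normv u ^+ 2 = dotv u u.
Proof. by rewrite /normv sqr_sqrtr // dotv_ge0. Qed.
Lemma normv_ge0 u : 0 <= normv u.
Proof. exact: sqrtr_ge0. Qed.
Lemma dotv_symM (M : 'M[R]_n) u v : M^T = M -> dotv u (M *m v) = dotv (M *m u) v.
Proof.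
move=> HM; rewrite /dotv mulmxA trmx_mul HM //.
Qed.
Lemma dotv_eq0 u : dotv u u = 0 -> u = 0.
Proof.
rewrite dotvE => /eqP; rewrite psumr_eq0 => [/allP Hall|j _]; last by rewrite -expr2 sqr_ge0.
apply/matrixP => i j; rewrite ord1 mxE.
have := Hall i (mem_index_enum i); rewrite implyTb -expr2 sqrf_eq0 => /eqP //.
Qed.
End S.

Section Main.
Variables (R : rcfType) (n : nat) (g : 'cV[R]_n) (H : 'M[R]_n) (eps : R).
Hypothesis HT : H^T = H.
Definition A := Heps H eps.
Lemma AT : A^T = A.
Proof. by rewrite /A /Heps linearD /= HT tr_scalar_mx. Qed.
Definition st k := locked (cg_iter g H eps k).
Lemma stE k : st k = cg_iter g H eps k. Proof. by rewrite /st -lock. Qed.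
Definition y k := cg_y (st k).
Definition r k := cg_r (st k).
Definition p k := cg_p (st k).
Definition N k := dotv (r k) (r k).
Definition pAp k := dotv (p k) (A *m p k).
Definition al k := N k / pAp k.
Lemma stS k : st k.+1 = cg_step H eps (st k).
Proof. by rewrite !stE /cg_iter iterS. Qed.
Lemma y0 : y 0 = 0. Proof. by rewrite /y stE. Qed.
Lemma r0 : r 0 = g. Proof. by rewrite /r stE. Qed.
Lemma p0 : p 0 = - g. Proof. by rewrite /p stE. Qed.
Lemma yS k : y k.+1 = y k + al k *: p k.
Proof. by rewrite /y stS /= /cg_ynext /cg_alpha normv2. Qed.
Lemma rS k : r k.+1 = r k + al k *: (A *m p k).
Proof. by rewrite /r stS /= /cg_rnext /cg_alpha normv2. Qed.
Lemma pS k : p k.+1 = - r k.+1 + (N k.+1 / N k) *: p k.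
Proof. by rewrite /p stS /= !normv2 /N /r stS. Qed.
Lemma rfromp k : r k.+1 = (N k.+1 / N k) *: p k - p k.+1.
Proof. by rewrite pS opprD opprK addrCA subrr addr0. Qed.
Lemma symA u v : dotv u (A *m v) = dotv v (A *m u).
Proof. by rewrite dotv_symM ?AT // dotvC. Qed.
Lemma rAy k : r k = g + A *m y k.
Proof.
elim: k => [|k IH]; first by rewrite r0 y0 mulmx0 addr0.
by rewrite rS yS IH mulmxDr -scalemxAr addrA.
Qed.

Definition Good k := forall i, (i < k)%N -> 0 < pAp i /\ 0 < N i.

Lemma alpAp i : 0 < pAp i -> al i * pAp i = N i.
Proof. by move=> h; rewrite /al mulfVK // gt_eqF. Qed.

Lemma Nk_ne0 k : 0 < N k -> N k != 0.
Proof. by move=> h; rewrite gt_eqF. Qed.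
Lemma al_gt0 k : 0 < pAp k -> 0 < N k -> 0 < al k.
Proof. by move=> h1 h2; rewrite /al divr_gt0. Qed.

Lemma orth k : Good k -> forall i, (i < k)%N ->
  dotv (r k) (p i) = 0 /\ dotv (p k) (A *m p i) = 0.
Proof.
elim: k => [|k IH] Hg i Hi; first by [].
have Hgk : Good k by move=> j hj; apply: Hg; exact: ltnW.
have [pk Nk] := Hg k (ltnSn k).
have rpk : dotv (r k) (p k) = - N k.
  clear Hi; case: k IH Hg Hgk pk Nk => [|k] IH Hg Hgk pk Nk.
    by rewrite /N r0 p0 dotvNr.
  rewrite pS dotvDr dotvNr dotvZr (IH Hgk k (ltnSn k)).1 mulr0 addr0 //.
have rp : forall j, (j <= k)%N -> dotv (r k.+1) (p j) = 0.
  move=> j; rewrite leq_eqVlt => /orP [/eqP -> | hj].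
    by rewrite rS dotvDl dotvZl rpk (dotvC (A *m p k)) -/(pAp k) alpAp // addNr.
  by rewrite rS dotvDl dotvZl (dotvC (A *m p k)) symA (IH Hgk j hj).1 (IH Hgk j hj).2 mulr0 addr0.
have rr : forall j, (j <= k)%N -> dotv (r k.+1) (r j) = 0.
  case => [|j] hj.
    by rewrite r0 -[g]opprK -p0 dotvNr rp // oppr0.
  rewrite (rfromp j) dotvDr dotvNr dotvZr !rp ?mulr0 ?oppr0 ?addr0 //; exact: ltnW.
have pp : forall j, (j <= k)%N -> dotv (p k.+1) (A *m p j) = 0.
  move=> j hj; have [pj Nj] := Hg j hj.
  have alj : al j != 0 by rewrite gt_eqF // al_gt0.
  have e : al j *: (A *m p j) = r j.+1 - r j by rewrite rS addrAC subrr add0r.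
  suff : al j * dotv (p k.+1) (A *m p j) = 0.
    by move/eqP; rewrite mulf_eq0 (negbTE alj) /= => /eqP.
  rewrite -dotvZr e pS dotvDl dotvNl dotvZl.
  move: hj; rewrite leq_eqVlt => /orP [/eqP ej | hj].
    subst j; rewrite dotvDr dotvNr (rr k) // oppr0 addr0 -/(N k.+1).
    rewrite dotvDr dotvNr (dotvC (p k)) rp // (dotvC (p k)) rpk opprK add0r.
    by rewrite mulfVK ?Nk_ne0 // addNr.
  rewrite dotvDr dotvNr (rr j.+1 hj) (rr j (ltnW hj)) subrr oppr0 add0r.
  by rewrite -e dotvZr (IH Hgk j hj).2 !mulr0.
by split; [apply: rp | apply: pp].
Qed.

Lemma inv k : Good k -> [/\ dotv (r k) (y k) = 0, dotv (p k) (A *m y k) = 0,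
  0 <= dotv (y k) (A *m y k), 0 <= dotv (y k) (p k) & dotv (r k) (p k) = - N k].
Proof.
elim: k => [|k IH] Hg.
  by rewrite y0 r0 p0 mulmx0 !dotv0r !dotv0l dotvNr /N r0; split.
have Hgk : Good k by move=> j hj; apply: Hg; exact: ltnW.
have [pk Nk] := Hg k (ltnSn k).
have alk := al_gt0 pk Nk.
have [ry py yy yp rp] := IH Hgk.
have rp' : dotv (r k.+1) (p k) = 0 := (orth Hg (ltnSn k)).1.
have rg : dotv (r k.+1) g = 0.
  by rewrite -[g]opprK -p0 dotvNr (orth Hg (ltn0Sn k)).1 oppr0.
have ry' : dotv (r k.+1) (y k.+1) = 0.
  rewrite yS dotvDr dotvZr rp' mulr0 addr0 rS dotvDl dotvZl ry.
  by rewrite (dotvC (A *m p k)) symA py mulr0 addr0.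
have Ay' : A *m y k.+1 = r k.+1 - g by rewrite (rAy k.+1) addrC addKr.
have pg : dotv (p k) g = - N k.
  have -> : g = r k - A *m y k by rewrite (rAy k) addrK.
  by rewrite dotvDr dotvNr (dotvC (p k)) rp py oppr0 addr0.
split.
- exact: ry'.
- rewrite pS dotvDl dotvNl dotvZl Ay' !dotvDr !dotvNr rg (dotvC (p k)) rp' pg.
  rewrite -/(N k.+1) oppr0 addr0 sub0r opprK mulfVK ?Nk_ne0 //; by rewrite addNr.
- rewrite yS mulmxDr -scalemxAr !dotvDl !dotvDr !dotvZl !dotvZr (symA (y k) (p k)) py -/(pAp k).
  rewrite !mulr0 !addr0 add0r; apply: addr_ge0 => //.
  by apply: mulr_ge0; [exact: ltW | apply: mulr_ge0; exact: ltW].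
- rewrite pS dotvDr dotvNr dotvZr (dotvC _ (r k.+1)) ry' oppr0 add0r.
  apply: mulr_ge0; first by apply: divr_ge0; exact: dotv_ge0.
  rewrite yS dotvDl dotvZl; apply: addr_ge0 => //.
  by apply: mulr_ge0; [exact: ltW | exact: dotv_ge0].
- by rewrite pS dotvDr dotvNr dotvZr rp' mulr0 addr0.
Qed.

Lemma HA u : dotv u (H *m u) = dotv u (A *m u) - 2 * eps * dotv u u.
Proof.
have -> : dotv u (A *m u) = dotv u (H *m u) + 2 * eps * dotv u u.
  by rewrite /A /Heps mulmxDl mul_scalar_mx dotvDr dotvZr.
by rewrite addrK.
Qed.

Lemma gE k : g = r k - A *m y k.
Proof. by rewrite (rAy k) addrK. Qed.

Lemma goal_bnd j sg : Good j -> 0 < eps -> 0 <= sg ->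
  (pAp j <= eps * dotv (p j) (p j) \/ (0 < pAp j /\ sg <= al j)) ->
  dotv g (y j + sg *: p j) + 2^-1 * dotv (y j + sg *: p j) (H *m (y j + sg *: p j))
    <= - (2^-1 * eps * normv (y j + sg *: p j) ^+ 2).
Proof.
move=> Hg he hs hc.
have [ry py yy yp rp] := inv Hg.
have gy : dotv g (y j) = - dotv (y j) (A *m y j).
  by rewrite (gE j) dotvDl dotvNl ry add0r dotvC.
have gp : dotv g (p j) = - N j.
  by rewrite (gE j) dotvDl dotvNl rp dotvC py oppr0 addr0.
have gs : dotv g (y j + sg *: p j) = - dotv (y j) (A *m y j) - sg * N j.
  by rewrite dotvDr dotvZr gy gp mulrN.
have sAs : dotv (y j + sg *: p j) (A *m (y j + sg *: p j))
    = dotv (y j) (A *m y j) + sg ^+ 2 * pAp j.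
  rewrite mulmxDr -scalemxAr dotvDl dotvDr dotvDr !dotvZl !dotvZr.
  by rewrite (symA (y j) (p j)) py !mulr0 addr0 add0r mulrA -expr2.
have ss : dotv (y j + sg *: p j) (y j + sg *: p j)
    = dotv (y j) (y j) + 2 * sg * dotv (y j) (p j) + sg ^+ 2 * dotv (p j) (p j).
  rewrite dotvDl dotvDr dotvDr !dotvZl !dotvZr (dotvC (p j) (y j)).
  by rewrite mulrA -expr2 mulr2n; ring.
rewrite normv2 HA gs sAs ss.
have N0 : 0 <= N j by exact: dotv_ge0.
have P0 : 0 <= dotv (p j) (p j) by exact: dotv_ge0.
have Y0 : 0 <= dotv (y j) (y j) by exact: dotv_ge0.
move: yy yp N0 P0 Y0.
set a := dotv (y j) (A *m y j); set b := dotv (y j) (p j); set P := dotv (p j) (p j).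
set Y := dotv (y j) (y j); set c := pAp j; set NN := N j => yy yp N0 P0 Y0.
case: hc => [hc | [hc hsa]].
  have h1 : sg ^+ 2 * c <= sg ^+ 2 * (eps * P) by apply: ler_wpM2l => //; exact: sqr_ge0.
  have h2 : 0 <= eps * (2 * sg * b) by apply: mulr_ge0; [exact: ltW | apply: mulr_ge0 => //; apply: mulr_ge0].
  have h3 : 0 <= eps * Y by apply: mulr_ge0 => //; exact: ltW.
  have h4 : 0 <= sg * NN by apply: mulr_ge0.
  lra.
have e : al j * c = NN by rewrite /c alpAp.
have h1 : sg ^+ 2 * c <= sg * (al j * c).
  by rewrite expr2 -mulrA; apply: ler_wpM2l => //; apply: ler_wpM2r => //; exact: ltW.
rewrite e in h1.
have h3 : 0 <= eps * (Y + 2 * sg * b + sg ^+ 2 * P).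
  apply: mulr_ge0; first exact: ltW.
  apply: addr_ge0; [apply: addr_ge0 => //; do 2 apply: mulr_ge0 => // | apply: mulr_ge0 => //; exact: sqr_ge0].
have h4 : 0 <= sg * NN by apply: mulr_ge0.
lra.
Qed.

Lemma ssE (u v : 'cV[R]_n) t : dotv (u + t *: v) (u + t *: v)
    = dotv u u + 2 * t * dotv u v + t ^+ 2 * dotv v v.
Proof.
rewrite dotvDl dotvDr dotvDr !dotvZl !dotvZr (dotvC v u).
by rewrite mulrA -expr2 mulr2n; ring.
Qed.

Lemma goal_y k : Good k -> 0 < eps ->
  dotv g (y k) + 2^-1 * dotv (y k) (H *m y k) <= - (2^-1 * eps * normv (y k) ^+ 2).
Proof.
move=> Hg he; have := @goal_bnd k 0 Hg he (lexx 0).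
rewrite scale0r addr0; apply.
case: (lerP (pAp k) (eps * dotv (p k) (p k))) => h; first by left.
have hp : 0 < pAp k by apply: le_lt_trans h; apply: mulr_ge0; [exact: ltW | exact: dotv_ge0].
right; split => //; rewrite /al /N; apply: divr_ge0; [exact: dotv_ge0 | exact: ltW].
Qed.

Lemma sig_le j sg delta : Good j -> 0 < delta -> normv (y j) < delta -> 0 <= sg ->
  normv (y j + sg *: p j) = delta -> delta <= normv (y j + al j *: p j) -> 0 <= al j ->
  sg <= al j.
Proof.
move=> Hg hd hy hs hn ha hal.
have [_ _ _ yp _] := inv Hg.
have P0 : 0 <= dotv (p j) (p j) by exact: dotv_ge0.
have Y0 := normv_ge0 (y j).
have A0 := normv_ge0 (y j + al j *: p j).
have e1 := normv2 (y j + sg *: p j).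
have e2 := normv2 (y j + al j *: p j).
have e3 := normv2 (y j).
rewrite ssE in e1; rewrite ssE in e2; rewrite hn in e1.
move: e1 e2 e3 yp P0.
set Y := dotv (y j) (y j); set b := dotv (y j) (p j); set P := dotv (p j) (p j).
move=> e1 e2 e3 yp P0.
rewrite leNgt; apply/negP => hlt.
have h1 : normv (y j) ^+ 2 < delta ^+ 2 by nra.
have h2 : delta ^+ 2 <= normv (y j + al j *: p j) ^+ 2 by nra.
have h3 : 0 <= al j * sg * P * (sg - al j).
  apply: mulr_ge0; last by rewrite subr_ge0 ltW.
  by apply: mulr_ge0 => //; apply: mulr_ge0.
have h4 : 0 < (sg - al j) * (delta ^+ 2 - Y) by apply: mulr_gt0; rewrite subr_gt0 -?e3.
have h5 : sg * delta ^+ 2 <= sg * normv (y j + al j *: p j) ^+ 2 by apply: ler_wpM2l.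
nra.
Qed.

Variables (delta zeta : R).
Lemma rnextE m : cg_rnext H eps (cg_iter g H eps m) = r m.+1.
Proof. by rewrite /r stS stE. Qed.
Lemma ynextE m : cg_ynext H eps (cg_iter g H eps m) = y m.+1.
Proof. by rewrite /y stS stE. Qed.
Lemma yE m : cg_y (cg_iter g H eps m) = y m. Proof. by rewrite /y stE. Qed.
Lemma pE m : cg_p (cg_iter g H eps m) = p m. Proof. by rewrite /p stE. Qed.

Lemma pApos i : 0 < eps -> ~ test_neg H eps (cg_iter g H eps i) -> 0 < pAp i.
Proof.
move=> he h.
have hlt : eps * normv (p i) ^+ 2 < pAp i.
  by rewrite ltNge; apply/negP; rewrite /pAp /A -pE.
apply: le_lt_trans hlt; apply: mulr_ge0; [exact: ltW | exact: sqr_ge0].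
Qed.

Lemma Npos j : g != 0 -> 0 < zeta -> 0 < eps ->
  (forall i, (i < j)%N -> no_stop g H eps delta zeta (cg_iter g H eps i)) -> 0 < N j.
Proof.
move=> hg hz he hns; case: j hns => [|m] hns.
  rewrite /N r0 lt_def dotv_ge0 andbT; apply/eqP => /dotv_eq0 h.
  by rewrite h eqxx in hg.
have [_ [_ hr]] := hns m (ltnSn m).
move: hr; rewrite /test_res rnextE ynextE => hr.
have hlt : zeta / 2 * Num.min (normv g) (eps * normv (y m.+1)) < normv (r m.+1).
  by rewrite ltNge; apply/negP.
have h0 : 0 <= zeta / 2 * Num.min (normv g) (eps * normv (y m.+1)).
  apply: mulr_ge0; first by apply: divr_ge0 => //; exact: ltW.
  rewrite le_min normv_ge0 /=; apply: mulr_ge0; [exact: ltW | exact: normv_ge0].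
by rewrite /N -normv2 exprn_gt0 // (le_lt_trans h0 hlt).
Qed.

Lemma good_of j : g != 0 -> 0 < zeta -> 0 < eps ->
  (forall i, (i < j)%N -> no_stop g H eps delta zeta (cg_iter g H eps i)) -> Good j.
Proof.
move=> hg hz he hns i hi; split; first by apply: pApos => //; exact: (hns i hi).1.
apply: Npos => // i' hi'; apply: hns; exact: ltn_trans hi' hi.
Qed.

Lemma good_ofS j : g != 0 -> 0 < zeta -> 0 < eps ->
  (forall i, (i < j)%N -> no_stop g H eps delta zeta (cg_iter g H eps i)) ->
  ~ test_neg H eps (cg_iter g H eps j) -> Good j.+1.
Proof.
move=> hg hz he hns hn i; rewrite ltnS leq_eqVlt => /orP [/eqP -> | hi].
  by split; [exact: pApos | exact: Npos].
exact: (good_of hg hz he hns hi).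
Qed.
End Main.

Theorem lemma3p3 (R : rcfType) (n : nat) (g : 'cV[R]_n) (H : 'M[R]_n)
  (eps delta zeta : R) (kmax : nat) (s : 'cV[R]_n) :
  g != 0 -> H^T = H -> 0 < eps -> 0 < delta -> 0 < zeta < 1 -> (kmax <= n)%N ->
  alg2_returns g H eps delta zeta kmax s ->
  dotv g s + 2^-1 * dotv s (H *m s) <= - (2^-1 * eps * normv s ^+ 2).
Proof.
move=> hg HT he hd /andP[hz _] _ [[j [hj [hns hstop]]] | [hns ->]]; last first.
  rewrite yE; apply: goal_y => //; exact: (good_of hg hz he hns).
have Hg : Good g H eps j by exact: (good_of hg hz he hns).
case: hstop => [[hneg [sg [hs [-> hn]]]] | [[hneg [hnorm [sg [hs [-> hn]]]]] | [hneg [hnorm [hres ->]]]]].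
- rewrite yE pE; apply: goal_bnd => //; left.
  by move: hneg; rewrite /test_neg pE normv2.
- rewrite yE pE; apply: goal_bnd => //; right.
  have hp : 0 < pAp g H eps j by exact: pApos.
  split => //; apply: (@sig_le _ _ _ _ _ HT j sg delta) => //.
  + case: j hj hns Hg hneg hnorm hn hp => [|m] hj hns Hg hneg hnorm hn hp.
      by rewrite y0 /normv dotv0r sqrtr0.
    have [_ [hm _]] := hns m (ltnSn m).
    by move: hm; rewrite /test_norm ynextE => hm; rewrite ltNge; apply/negP.
  + by rewrite -yE -pE.
  + by move: hnorm; rewrite /test_norm ynextE yS.
  + by rewrite /al; apply: divr_ge0; [exact: dotv_ge0 | exact: ltW].
- rewrite ynextE; apply: goal_y => //; exact: (good_ofS hg hz he hns).
Qed.
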